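(* Let $n\geq 1$. If ${\bf f}[n]=a$, then every valid representation $[k_m\cdots k_0]_F$ of $n$ ends with an even number of $0$s (i.e. the number of trailing zero digits is even). If ${\bf f}[n]=b$, then every valid representation of $n$ ends with an odd number of $0$s.
   Context: Fibonacci numbers: $F_0=0$, $F_1=1$, $F_{m+2}=F_{m+1}+F_m$. Standard Fibonacci words over $\{a,b\}$: $f_{-1}=b$, $f_0=a$, $f_{m+1}=f_mf_{m-1}$ for $m\geq 0$ (so $|f_m|=F_{m+2}$). The Fibonacci infinite word is ${\bf f}=\lim_{m\to\infty} f_m=abaababaab\cdots$, indexed from ${\bf f}[1]=a$; ${\bf f}(0..j]$ denotes its prefix of length $j$. For nonnegative integers $k_m,\dots,k_0$, the notation $[k_m\cdots k_0]_F$ denotes the integer $\sum_{i=0}^m k_iF_{i+2}$. A representation $N=[k_m\cdots k_0]_F$ with all $k_i\geq 0$ is called valid if ${\bf f}(0..N]=f_m^{k_m}f_{m-1}^{k_{m-1}}\cdots f_0^{k_0}$ (concatenation, $u^k$ meaning $k$ copies of $u$). *)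

(* Defs.v *)
From HB Require Import structures.
From mathcomp Require Import all_boot.
Set Implicit Arguments. Unset Strict Implicit. Unset Printing Implicit Defensive.

Inductive letter := la | lb.
Definition letter_eqb (x y : letter) : bool :=
  match x, y with la, la | lb, lb => true | _, _ => false end.
Lemma letter_eqP : Equality.axiom letter_eqb.
Proof. by case; case; constructor. Qed.
HB.instance Definition _ := hasDecEq.Build letter letter_eqP.

Fixpoint fib (n : nat) : nat :=
  match n with
  | 0 => 0
  | 1 => 1
  | (m.+1 as p).+1 => fib p + fib m
  end.

(* fwS j = f_{j-1}:  fwS 0 = f_{-1} = b, fwS 1 = f_0 = a,
   fwS (j+2) = fwS (j+1) ++ fwS j, i.e. f_{m+1} = f_m f_{m-1}. *)
Fixpoint fwS (j : nat) : seq letter :=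
  match j with
  | 0 => [:: lb]
  | 1 => [:: la]
  | (p.+1 as q).+1 => fwS q ++ fwS p
  end.

Definition fw (m : nat) : seq letter := fwS m.+1.

(* The infinite Fibonacci word, indexed from 1: f[i] is the i-th letter.
   Since each f_m is a prefix of f_{m+1} and |f_i| = F_{i+2} >= i+1,
   the i-th letter of the limit is the i-th letter of f_i. *)
Definition fibinf (i : nat) : letter := nth la (fw i) i.-1.

Definition fibpref (j : nat) : seq letter := take j (fw j).

(* A representation [k_m ... k_0]_F is given by m and the digit function k
   (only k 0, ..., k m matter). *)
Definition repval (m : nat) (k : nat -> nat) : nat :=
  \sum_(0 <= i < m.+1) k i * fib i.+2.

Definition repword (m : nat) (k : nat -> nat) : seq letter :=
  flatten [seq flatten (nseq (k i) (fw i)) | i <- rev (iota 0 m.+1)].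

Definition valid_rep (N m : nat) (k : nat -> nat) : Prop :=
  N = repval m k /\ fibpref N = repword m k.

(* Number of trailing zero digits: index of the first nonzero among
   k_0, k_1, ..., k_m (m+1 if all digits are 0). *)
Definition trailing_zeros (m : nat) (k : nat -> nat) : nat :=
  find (fun i => k i != 0) (iota 0 m.+1).

(* Main.v *)
Require Import Defs.
From mathcomp Require Import all_boot.

Lemma fwS_size j : j <= size (fwS j) /\ 0 < size (fwS j).
Proof.
elim: j {-2}j (leqnn j) => [|N IH] j hj.
  by case: j hj.
case: j hj => [|[|p]] hj //=.
rewrite size_cat.
have [h1 h2] := IH p.+1 hj.
have [h3 h4] := IH p (ltnW hj).
split; last by rewrite addn_gt0 h2.
by apply: leq_trans (leq_add h1 h4); rewrite addn1.
Qed.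

Lemma fwS_last j x : last x (fwS j) = if odd j then la else lb.
Proof.
elim: j {-2}j (leqnn j) x => [|N IH] j hj x.
  by case: j hj.
case: j hj => [|[|p]] hj //=.
rewrite last_cat IH ?negbK //; exact: ltnW.
Qed.

Lemma last_nseq (s : seq letter) c x : 0 < size s -> 0 < c ->
  last x (flatten (nseq c s)) = last x s.
Proof.
case: s => // y s _.
elim: c x => [|[|c] IH] x //= _.
  by rewrite cats0.
rewrite last_cat /=.
by have := IH x erefl; rewrite /= last_cat /= => ->.
Qed.

Lemma repword_S m k : repword m.+1 k =
  flatten (nseq (k m.+1) (fw m.+1)) ++ repword m k.
Proof.
by rewrite /repword -addn1 iotaD rev_cat /= add0n.
Qed.

Lemma repword_nil m k : ~~ has (fun i => k i != 0) (iota 0 m.+1) ->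
  repword m k = [::].
Proof.
move=> /hasPn H.
rewrite /repword; elim: (rev (iota 0 m.+1)) (fun i (h : i \in rev (iota 0 m.+1)) => H i (etrans (esym (mem_rev _ _)) h)) => [|i s IH] H' //=.
have := H' i (mem_head _ _); rewrite negbK => /eqP ->.
by rewrite /= IH // => j hj; apply: H'; rewrite in_cons hj orbT.
Qed.

Lemma repword_last m k x : has (fun i => k i != 0) (iota 0 m.+1) ->
  last x (repword m k) = if odd (trailing_zeros m k) then lb else la.
Proof.
rewrite /trailing_zeros.
elim: m x => [|m IH] x.
  rewrite /= orbF => hk.
  rewrite /repword /= cats0 last_nseq //; last by rewrite lt0n.
  by rewrite hk /fw fwS_last.
rewrite repword_S -addn1 iotaD add0n find_cat has_cat.
set P := (fun i => k i != 0).
rewrite -/P in IH.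
case hh: (has P (iota 0 m.+1)) => hk.
  by rewrite last_cat IH.
have hm : P m.+1 by move: hk => /=; rewrite orbF.
have -> : find P (iota m.+1 1) = 0 by rewrite /= hm.
rewrite repword_nil ?hh // cats0 last_nseq; last by rewrite lt0n.
  by rewrite /fw fwS_last size_iota addn0 /=; case: (odd m).
by rewrite /fw; case: (fwS_size m.+2).
Qed.

Theorem proposition1 (n : nat) : 1 <= n ->
  (fibinf n = la ->
     forall (m : nat) (k : nat -> nat), valid_rep n m k -> ~~ odd (trailing_zeros m k)) /\
  (fibinf n = lb ->
     forall (m : nat) (k : nat -> nat), valid_rep n m k -> odd (trailing_zeros m k)).
Proof.
move=> hn.
suff H : forall m k, valid_rep n m k ->
  fibinf n = if odd (trailing_zeros m k) then lb else la.
  split=> hf m k /H; rewrite hf; case: (odd _) => //.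
move=> m k [_ hp].
have hs : size (fibpref n) = n.
  by rewrite /fibpref size_takel // /fw; case: (fwS_size n.+1) => /ltnW.
have hh : has (fun i => k i != 0) (iota 0 m.+1).
  apply/negPn/negP => /repword_nil hr.
  by move: hs; rewrite hp hr /= => hs; rewrite -hs in hn.
rewrite -(@repword_last m k la hh) -hp -nth_last hs /fibinf /fibpref nth_take //.
by rewrite prednK.
Qed.
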